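(* Let $\mathfrak{g}$ be one of the following $6$-dimensional nilpotent Lie algebras: $(0,0,12,13,14,15)$, $(0,0,12,13,14,23+15)$, $(0,0,0,12,14,24)$, $(0,0,0,12,13+42,14+23)$, $(0,0,0,12,14,13+42)$, $(0,0,0,12,13+14,24)$, $(0,0,0,12,13,14)$, $(0,0,0,0,12,15)$. Then $\mathfrak{g}$ admits a coherent splitting $\mathfrak{g}^*=V_1\oplus V_2$ with $V_1=\operatorname{span}\{e^1,e^2\}$ (so that $\Lambda^{2,0}$ is spanned by $e^{12}$) for which $h^{0,3}=0=h^{0,4}$.
   Context: Notation: $(0,0,12,13,14,15)$ denotes the Lie algebra having a basis $e^1,\dots,e^6$ of $\mathfrak{g}^*$ with $de^1=de^2=0$, $de^3=e^{12}$, $de^4=e^{13}$, $de^5=e^{14}$, $de^6=e^{15}$, where $e^{ij}=e^i\wedge e^j$, entries like $13+42$ mean $e^{13}+e^4\wedge e^2$, and $d$ is the Chevalley–Eilenberg differential. A coherent splitting is a decomposition $\mathfrak{g}^*=V_1\oplus V_2$ with $\dim V_1=2$ such that, with $\Lambda^{p,q}=\Lambda^pV_1\otimes\Lambda^qV_2$, $d(\Lambda^{p,q})\subset\Lambda^{p+1,q}+\Lambda^{p+2,q-1}$. With $F^k_p=\bigoplus_{p'\ge p}\Lambda^{p',k-p'}$, $Z^k$ the closed $k$-forms, $H^k$ the $k$-th cohomology of $(\Lambda^*\mathfrak{g}^*,d)$ and $H^k_p\subset H^k$ the image of $Z^k\cap F^k_p$, set $H^{p,q}=H^{p+q}_p/H^{p+q}_{p+1}$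 and $h^{p,q}=\dim H^{p,q}$ (these depend only on $V_1$). *)

(* Defs.v *)
From HB Require Import structures.
From mathcomp Require Import all_boot all_order all_algebra.
From mathcomp Require Import reals.
Set Implicit Arguments. Unset Strict Implicit. Unset Printing Implicit Defensive.
Import Order.TTheory GRing.Theory Num.Theory.
Local Open Scope ring_scope.

Section ExtAlg.
Variable R : realType.

(* Λ^* g^* : a eform is given by its coefficients on the basis e^S = e^{i1}∧...∧e^{ik}
   (S = {i1 < ... < ik} ⊆ {0..5}, index i standing for e^{i+1}). *)
Definition eform := {ffun {set 'I_6} -> R^o}.

Definition eb (S : {set 'I_6}) : eform := [ffun T => (T == S)%:R].

(* sign of e^S ∧ e^T = ± e^{S ∪ T} (S, T disjoint): number of inversions *)
Definition wsign (S T : {set 'I_6}) : R :=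
  (-1) ^+ #|[set p : 'I_6 * 'I_6 | (p.1 \in S) && (p.2 \in T) && (p.2 < p.1)%N]|.

Definition wedge (a b : eform) : eform :=
  [ffun U => \sum_(S : {set 'I_6}) \sum_(T : {set 'I_6})
     ((S :&: T == set0) && (S :|: T == U))%:R * wsign S T * a S * b T].

(* e i := e^i with the paper's 1-based indexing *)
Definition e (i : nat) : eform := eb [set (inord i.-1 : 'I_6)].

(* dE i is d(e^{i+1}); d is extended to Λ^* g^* as a (graded) derivation:
   d(e^{i1}∧...∧e^{ik}) = Σ_j (-1)^{j-1} e^{i1}∧..∧ d e^{ij} ∧..∧e^{ik}
   (the 2-forms d e^{ij} commute with everything). *)
Definition dbasis (dE : 'I_6 -> eform) (S : {set 'I_6}) : eform :=
  \sum_(i in S) ((-1) ^+ #|[set j in S | (j < i)%N]| : R) *: wedge (dE i) (eb (S :\ i)).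

Definition dfun (dE : 'I_6 -> eform) (x : eform) : eform :=
  \sum_(S : {set 'I_6}) x S *: dbasis dE S.

Definition dlin (dE : 'I_6 -> eform) : 'End(eform) := linfun (dfun dE).

Definition wedgeS (U W : {vspace eform}) : {vspace eform} :=
  <<[seq wedge u w | u <- vbasis U, w <- vbasis W]>>%VS.

Fixpoint Lam (V : {vspace eform}) (k : nat) : {vspace eform} :=
  if k is k'.+1 then wedgeS V (Lam V k') else <[eb set0]>%VS.

Definition G1 : {vspace eform} := <<[seq eb [set i] | i <- enum 'I_6]>>%VS.
Definition V1 : {vspace eform} := <<[:: e 1; e 2]>>%VS.

Definition Lpq (V2 : {vspace eform}) (p q : nat) : {vspace eform} :=
  wedgeS (Lam V1 p) (Lam V2 q).

Definition Lpq_shift (V2 : {vspace eform}) (p q : nat) : {vspace eform} :=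
  if q is q'.+1 then Lpq V2 p.+2 q' else 0%VS.

Definition complement (V2 : {vspace eform}) : Prop :=
  (V2 <= G1)%VS /\ (V1 :&: V2)%VS = 0%VS /\ (V1 + V2)%VS = G1.

Definition coherent (dE : 'I_6 -> eform) (V2 : {vspace eform}) : Prop :=
  complement V2 /\
  forall p q : nat, (dlin dE @: Lpq V2 p q <= Lpq V2 p.+1 q + Lpq_shift V2 p q)%VS.

Definition Fil (V2 : {vspace eform}) (k p : nat) : {vspace eform} :=
  (\sum_(p <= p' < k.+1) Lpq V2 p' (k - p'))%VS.

Definition Zk (dE : 'I_6 -> eform) (k : nat) : {vspace eform} :=
  (lker (dlin dE) :&: Lam G1 k)%VS.
Definition Bk (dE : 'I_6 -> eform) (k : nat) : {vspace eform} :=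
  if k is k'.+1 then (dlin dE @: Lam G1 k')%VS else 0%VS.

(* preimage in Z^k of H^k_p : (Z^k ∩ F^k_p) + B^k ; H^k_p = this / B^k *)
Definition Hfil (dE : 'I_6 -> eform) (V2 : {vspace eform}) (k p : nat) : {vspace eform} :=
  (Zk dE k :&: Fil V2 k p + Bk dE k)%VS.

(* h^{p,q} = dim H^{p+q}_p / H^{p+q}_{p+1} *)
Definition hpq (dE : 'I_6 -> eform) (V2 : {vspace eform}) (p q : nat) : nat :=
  (\dim (Hfil dE V2 (p + q) p) - \dim (Hfil dE V2 (p + q) p.+1))%N.

Definition mk6 (a b c d f g : eform) : 'I_6 -> eform :=
  fun i => nth 0 [:: a; b; c; d; f; g] i.
Definition ee (i j : nat) : eform := wedge (e i) (e j).

Definition g1 := mk6 0 0 (ee 1 2) (ee 1 3) (ee 1 4) (ee 1 5).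
Definition g2 := mk6 0 0 (ee 1 2) (ee 1 3) (ee 1 4) (ee 2 3 + ee 1 5).
Definition g3 := mk6 0 0 0 (ee 1 2) (ee 1 4) (ee 2 4).
Definition g4 := mk6 0 0 0 (ee 1 2) (ee 1 3 + ee 4 2) (ee 1 4 + ee 2 3).
Definition g5 := mk6 0 0 0 (ee 1 2) (ee 1 4) (ee 1 3 + ee 4 2).
Definition g6 := mk6 0 0 0 (ee 1 2) (ee 1 3 + ee 1 4) (ee 2 4).
Definition g7 := mk6 0 0 0 (ee 1 2) (ee 1 3) (ee 1 4).
Definition g8 := mk6 0 0 0 0 (ee 1 2) (ee 1 5).

End ExtAlg.

(* Main.v *)
Require Import Defs.
From HB Require Import structures.
From mathcomp Require Import all_boot all_order all_algebra.
From mathcomp Require Import reals.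
From mathcomp Require Import ring.
Set Implicit Arguments. Unset Strict Implicit. Unset Printing Implicit Defensive.
Import Order.TTheory GRing.Theory Num.Theory.
Local Open Scope ring_scope.


Definition tb (a i : nat) : bool := odd (a %/ 2 ^ i)%N.
Definition setOf (a : nat) : {set 'I_6} := [set i : 'I_6 | tb a i].
Definition i6 := iota 0 6.
Definition rep (X : {set 'I_6}) (f : nat -> bool) := forall i : 'I_6, (i \in X) = f i.

Lemma rep_setOf a : rep (setOf a) (tb a).
Proof. by move=> i; rewrite inE. Qed.

Lemma rep_D1 X f n : (n < 6)%N -> rep X f -> rep (X :\ inord n) (fun m => f m && (m != n)).
Proof.
move=> hn h i; rewrite !inE h andbC; congr (_ && ~~ _).
apply/eqP/eqP => [->|E]; first by rewrite inordK.
by apply/val_inj; rewrite /= inordK.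
Qed.

Lemma rep_lt X f n : (n < 6)%N -> rep X f ->
  rep [set j : 'I_6 in X | (j < n)%N] (fun m => f m && (m < n)%N).
Proof. by move=> hn h i; rewrite !inE h. Qed.

Lemma rep_U X Y f g : rep X f -> rep Y g -> rep (X :|: Y) (fun m => f m || g m).
Proof. by move=> hX hY i; rewrite inE hX hY. Qed.

Lemma rep_I X Y f g : rep X f -> rep Y g -> rep (X :&: Y) (fun m => f m && g m).
Proof. by move=> hX hY i; rewrite inE hX hY. Qed.

Lemma rep_D X Y f g : rep X f -> rep Y g -> rep (X :\: Y) (fun m => ~~ g m && f m).
Proof. by move=> hX hY i; rewrite inE hX hY. Qed.

Definition A6 : {set 'I_6} := [set i : 'I_6 | (i < 2)%N].

Lemma rep0 : rep set0 (fun _ => false).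
Proof. by move=> i; rewrite inE. Qed.

Lemma repA : rep A6 (fun m => (m < 2)%N).
Proof. by move=> i; rewrite inE. Qed.

Lemma rep_eq X Y f g : rep X f -> rep Y g -> (X == Y) = all (fun m => f m == g m) i6.
Proof.
move=> hX hY; apply/eqP/allP => [E m|H].
  rewrite mem_iota add0n => /andP [_ hm].
  by rewrite -(hX (Ordinal hm)) -(hY (Ordinal hm)) E.
apply/setP => i; rewrite hX hY; apply/eqP/H.
by rewrite mem_iota /= ltn_ord.
Qed.

Lemma rep_disj X Y f g : rep X f -> rep Y g ->
  (X :&: Y == set0) = all (fun m => ~~ (f m && g m)) i6.
Proof.
move=> hX hY; rewrite (rep_eq (rep_I hX hY) rep0); apply: eq_all => m.
by case: (f m && g m).
Qed.

Lemma rep_card X f : rep X f -> #|X| = count f i6.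
Proof.
move=> hX; rewrite -sum1_card (eq_bigl (fun i : 'I_6 => f i)) //.
by rewrite -(big_mkord f (fun _ => 1%N)) sum1_count.
Qed.

Definition wc (f g : nat -> bool) : nat :=
  \sum_(m1 <- i6) count (fun m2 => f m1 && g m2 && (m2 < m1)%N) i6.

Lemma wcard_rep X Y f g : rep X f -> rep Y g ->
  #|[set p : 'I_6 * 'I_6 | (p.1 \in X) && (p.2 \in Y) && (p.2 < p.1)%N]| = wc f g.
Proof.
move=> hX hY.
have -> : #|[set p : 'I_6 * 'I_6 | (p.1 \in X) && (p.2 \in Y) && (p.2 < p.1)%N]| =
   #|[pred p : 'I_6 * 'I_6 | f p.1 && g p.2 && (p.2 < p.1)%N]|.
  by apply: eq_card => p; rewrite !inE hX hY.
rewrite -sum1_card big_mkcond /=.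
rewrite -(pair_bigA _ (fun (i j : 'I_6) => if f i && g j && (j < i)%N then 1%N else 0%N)) /=.
rewrite -(big_mkord xpredT (fun i => \sum_(j < 6) (if f i && g j && (j < i)%N then 1%N else 0%N))).
apply: eq_bigr => i _.
by rewrite -(big_mkord xpredT (fun j => if f i && g j && (j < i)%N then 1%N else 0%N)) -sum1_count [RHS]big_mkcond.
Qed.

Definition sgn (k : nat) : int := if odd k then -1 else 1.

Definition Dterm (L : nat -> seq (nat * int)) (a u n : nat) : int :=
  sgn (count (fun m => tb a m && (m < n)%N) i6) *
  \sum_(pc <- L n)
     (if all (fun m => ~~ (tb pc.1 m && (tb a m && (m != n)))) i6 &&
         all (fun m => (tb pc.1 m || (tb a m && (m != n))) == tb u m) i6
      then pc.2 * sgn (wc (tb pc.1) (fun m => tb a m && (m != n))) else 0).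

Definition DC (L : nat -> seq (nat * int)) (a u : nat) : int :=
  \sum_(n <- i6) (if tb a n then Dterm L a u n else 0).

Definition bidA a := count (fun m => tb a m && (m < 2)%N) i6.
Definition bidB a := count (fun m => ~~ (m < 2)%N && tb a m) i6.

Definition cohcond (a u : nat) :=
  ((bidA u == (bidA a).+1) && (bidB u == bidB a)) ||
  ((bidA u == (bidA a).+2) && (bidB u == (bidB a).-1) && (0 < bidB a)%N).

Definition chk_coh L := all (fun a => all (fun u => (DC L a u == 0) || cohcond a u) (iota 0 64)) (iota 0 64).

Definition chk_cert L k t (Us : seq (nat * int)) :=
  all (fun a => (count (tb a) i6 != k) || (\sum_(ul <- Us) ul.2 * DC L a ul.1 == (a == t)%:Z)) (iota 0 64).

Lemma tb_inj n a b : (a < 2 ^ n)%N -> (b < 2 ^ n)%N ->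
  (forall i, (i < n)%N -> tb a i = tb b i) -> a = b.
Proof.
elim: n a b => [|n IH] a b.
  by rewrite expn0 !ltnS !leqn0 => /eqP -> /eqP ->.
move=> ha hb H.
have h0 := H 0%N isT; rewrite /tb expn0 !divn1 in h0.
have hS : forall i, (i < n)%N -> tb (a %/ 2)%N i = tb (b %/ 2)%N i.
  by move=> i hi; have := H i.+1 hi; rewrite /tb !expnS !divnMA.
have e : (a %/ 2 = b %/ 2)%N.
  by apply: IH hS; rewrite ltn_divLR // -expnSr.
by rewrite (divn_eq a 2) (divn_eq b 2) e !modn2 h0.
Qed.

Lemma setOf_inj a b : (a < 64)%N -> (b < 64)%N -> setOf a = setOf b -> a = b.
Proof.
move=> ha hb E; apply: (@tb_inj 6) => // i hi.
by rewrite -(rep_setOf a (Ordinal hi)) -(rep_setOf b (Ordinal hi)) E.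
Qed.

Lemma setOfI_inj : injective (fun a : 'I_64 => setOf a).
Proof. by move=> a b /setOf_inj E; apply: val_inj; apply: E. Qed.

Lemma card_sets : (#|{set 'I_6}| <= #|'I_64|)%N.
Proof.
have inj : injective (@finfun_of_set 'I_6).
  by case=> f; case=> g /= ->.
by have := leq_card _ inj; rewrite card_ffun card_ord card_bool card_ord.
Qed.

Lemma setOf_bij : bijective (fun a : 'I_64 => setOf a).
Proof. exact: inj_card_bij setOfI_inj card_sets. Qed.

Lemma setOf_surj X : exists2 a, (a < 64)%N & X = setOf a.
Proof.
have := inj_card_onto setOfI_inj card_sets X.
by case/codomP => a ->; exists a.
Qed.

Lemma chk_all (P : nat -> bool) a : all P (iota 0 64) -> (a < 64)%N -> P a.
Proof. by move/allP => H ha; apply: H; rewrite mem_iota. Qed.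

Section Work.
Variable R : realType.
Local Notation F := (eform R).
Local Notation ebR := (@eb R).
Local Notation wsR := (@wsign R).
Implicit Types P Q : pred {set 'I_6}.

Lemma ebE X Y : ebR X Y = (Y == X)%:R.
Proof. by rewrite ffunE. Qed.

Lemma scaleE (k : R) (x : F) X : (k *: x) X = k * x X.
Proof. by rewrite ffunE. Qed.

Lemma form_expand (x : F) : x = \sum_X x X *: ebR X.
Proof.
apply/ffunP => Y; rewrite sum_ffunE (bigD1 Y) //= big1 => [|X nST].
  by rewrite scaleE ebE eqxx mulr1 addr0.
by rewrite scaleE ebE eq_sym (negbTE nST) mulr0.
Qed.

Definition CS (P : pred {set 'I_6}) : {vspace F} := <<[seq ebR X | X <- enum P]>>%VS.

Lemma memv_ebspan s (x : F) :
  (x \in <<[seq ebR X | X <- s]>>%VS) <-> (forall X, X \notin s -> x X = 0).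
Proof.
split.
  move=> /(@coord_span _ _ _ (in_tuple _) x) -> X nS; rewrite sum_ffunE big1 // => i _.
  rewrite scaleE (nth_map set0) ?ebE; last by rewrite -(size_map ebR); exact: ltn_ord.
  case: eqP => [eSi|]; last by rewrite mulr0.
  case/negP: nS; rewrite eSi mem_nth // -(size_map ebR); exact: ltn_ord.
move=> H; rewrite (form_expand x); apply: memv_suml => X _.
case: (boolP (X \in s)) => [Ss|nS]; last by rewrite H // scale0r mem0v.
by apply: memvZ; apply: memv_span; apply: map_f.
Qed.

Lemma memCS P (x : F) : (x \in CS P) <-> (forall X, ~~ P X -> x X = 0).
Proof.
rewrite /CS; split => [/memv_ebspan H X nP|H]; first by apply: H; rewrite mem_enum.
by apply/memv_ebspan => X; rewrite mem_enum; exact: H.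
Qed.

Lemma eb_CS P X : P X -> ebR X \in CS P.
Proof.
move=> PS; apply/memCS => Y nT; rewrite ebE; case: eqP => [eTS|]; last by [].
by move: nT; rewrite eTS PS.
Qed.

Lemma CS_sub P Q : (forall X, P X -> Q X) -> (CS P <= CS Q)%VS.
Proof.
move=> PQ; apply/subvP => x /memCS H; apply/memCS => X nQ; apply: H.
by apply: contra nQ; exact: PQ.
Qed.

Lemma CS_eq P Q : P =1 Q -> CS P = CS Q.
Proof.
by move=> PQ; apply: subv_anti; rewrite !CS_sub // => X; rewrite PQ.
Qed.

Lemma CS_add P Q : (CS P + CS Q)%VS = CS (fun X => P X || Q X).
Proof.
apply: subv_anti; apply/andP; split.
  by rewrite subv_add; apply/andP; split; apply: CS_sub => X ->; rewrite ?orbT.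
apply/subvP => x /memCS H; rewrite (form_expand x); apply: memv_suml => X _.
case: (boolP (P X)) => [PS|nP].
  by apply: memvZ; apply: (subvP (addvSl _ _)); exact: eb_CS.
case: (boolP (Q X)) => [QS|nQ].
  by apply: memvZ; apply: (subvP (addvSr _ _)); exact: eb_CS.
by rewrite H ?scale0r ?mem0v // negb_or nP.
Qed.

Lemma CS_cap P Q : (CS P :&: CS Q)%VS = CS (fun X => P X && Q X).
Proof.
apply/vspaceP => x; rewrite memv_cap; apply/idP/idP => [/andP[/memCS H1 /memCS H2]|/memCS H].
  apply/memCS => X; rewrite negb_and => /orP[]; [exact: H1|exact: H2].
by apply/andP; split; apply/memCS => X nS; apply: H; rewrite negb_and nS ?orbT.
Qed.

Lemma CS0 P : (forall X, ~~ P X) -> CS P = 0%VS.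
Proof.
move=> nP; apply/vspaceP => x; rewrite memv0; apply/idP/eqP => [/memCS H|->].
  by apply/ffunP => X; rewrite ffunE; apply: H.
by apply/memCS => X _; rewrite ffunE.
Qed.

Lemma wedgeE (a b : F) U : wedge a b U = \sum_X \sum_Y
   ((X :&: Y == set0) && (X :|: Y == U))%:R * wsR X Y * a X * b Y.
Proof. by rewrite ffunE. Qed.

Lemma wedgeDl (a a' b : F) : wedge (a + a') b = wedge a b + wedge a' b.
Proof.
apply/ffunP => U; rewrite [in RHS]ffunE !wedgeE -big_split; apply: eq_bigr => X _.
rewrite -big_split; apply: eq_bigr => Y _; by rewrite ffunE mulrDr mulrDl.
Qed.

Lemma wedgeDr (a b b' : F) : wedge a (b + b') = wedge a b + wedge a b'.
Proof.
apply/ffunP => U; rewrite [in RHS]ffunE !wedgeE -big_split; apply: eq_bigr => X _.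
rewrite -big_split; apply: eq_bigr => Y _; by rewrite ffunE mulrDr.
Qed.

Lemma wedgeZl k (a b : F) : wedge (k *: a) b = k *: wedge a b.
Proof.
apply/ffunP => U; rewrite scaleE !wedgeE mulr_sumr; apply: eq_bigr => X _.
rewrite mulr_sumr; apply: eq_bigr => Y _; rewrite scaleE; ring.
Qed.

Lemma wedgeZr k (a b : F) : wedge a (k *: b) = k *: wedge a b.
Proof.
apply/ffunP => U; rewrite scaleE !wedgeE mulr_sumr; apply: eq_bigr => X _.
rewrite mulr_sumr; apply: eq_bigr => Y _; rewrite scaleE; ring.
Qed.

Lemma wedge0l (b : F) : wedge 0 b = 0.
Proof. by move: (wedgeZl 0 0 b); rewrite !scale0r. Qed.
Lemma wedge0r (a : F) : wedge a 0 = 0.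
Proof. by move: (wedgeZr 0 a 0); rewrite !scale0r. Qed.

Lemma wedge_suml (I : Type) (r : seq I) (f : I -> F) b :
  wedge (\sum_(i <- r) f i) b = \sum_(i <- r) wedge (f i) b.
Proof.
elim: r => [|i r IH]; first by rewrite !big_nil wedge0l.
by rewrite !big_cons wedgeDl IH.
Qed.

Lemma wedge_sumr (I : Type) (r : seq I) (f : I -> F) a :
  wedge a (\sum_(i <- r) f i) = \sum_(i <- r) wedge a (f i).
Proof.
elim: r => [|i r IH]; first by rewrite !big_nil wedge0r.
by rewrite !big_cons wedgeDr IH.
Qed.

Lemma wedge_eb_coef Pa Vb U :
  wedge (ebR Pa) (ebR Vb) U = ((Pa :&: Vb == set0) && (Pa :|: Vb == U))%:R * wsR Pa Vb.
Proof.
rewrite wedgeE (bigD1 Pa) //= [X in _ + X]big1 ?addr0; last first.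
  by move=> X nSP; rewrite big1 // => Y _; rewrite !ebE (negbTE nSP) mulr0 mul0r.
rewrite (bigD1 Vb) //= [X in _ + X]big1 ?addr0; last first.
  by move=> Y nTV; rewrite !ebE (negbTE nTV) mulr0.
by rewrite !ebE !eqxx !mulr1.
Qed.


Definition Wp P Q : pred {set 'I_6} := fun U =>
  [exists X, exists Y, [&& P X, Q Y, X :&: Y == set0 & X :|: Y == U]].

Lemma wedge_CS P Q a b : a \in CS P -> b \in CS Q -> wedge a b \in CS (Wp P Q).
Proof.
move=> /memCS Ha /memCS Hb; apply/memCS => U nU; rewrite wedgeE big1 // => X _.
rewrite big1 // => Y _.
case: (boolP (P X)) => [PX|nPX]; last by rewrite Ha // mulr0 mul0r.
case: (boolP (Q Y)) => [QY|nQY]; last by rewrite Hb // mulr0.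
case E: (_ && _); last by rewrite !mul0r.
case/andP: E => h1 h2.
by case/negP: nU; apply/existsP; exists X; apply/existsP; exists Y; rewrite PX QY h1 h2.
Qed.

Lemma wsign_neq0 X Y : wsR X Y != 0.
Proof. by rewrite /wsign expf_neq0 // oppr_eq0 oner_eq0. Qed.

Lemma wedge_mem (U W : {vspace F}) u w : u \in U -> w \in W -> wedge u w \in wedgeS U W.
Proof.
move=> uU wW; rewrite (coord_vbasis uU) (coord_vbasis wW) wedge_suml.
apply: memv_suml => i _; rewrite wedgeZl; apply: memvZ.
rewrite wedge_sumr; apply: memv_suml => j _; rewrite wedgeZr; apply: memvZ.
by apply: memv_span; apply: allpairs_f; apply: mem_nth; rewrite size_tuple.
Qed.

Lemma wedgeS_CS P Q : wedgeS (CS P) (CS Q) = CS (Wp P Q).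
Proof.
apply: subv_anti; apply/andP; split.
  apply/span_subvP => z /allpairsP [[u w] [/= uB wB ->]].
  by apply: wedge_CS; exact: vbasis_mem.
apply/subvP => x /memCS Hx; rewrite (form_expand x); apply: memv_suml => U _.
case: (boolP (Wp P Q U)) => [/existsP [X /existsP [Y /and4P [PX QY h1 /eqP h2]]]|nW]; last first.
  by rewrite Hx // scale0r mem0v.
apply: memvZ.
have := wedge_mem (eb_CS PX) (eb_CS QY).
suff -> : wedge (ebR X) (ebR Y) = wsR X Y *: ebR U.
  by move/(memvZ (wsR X Y)^-1); rewrite scalerA mulVf ?wsign_neq0 // scale1r.
by apply/ffunP => V; rewrite wedge_eb_coef scaleE ebE h1 -h2 /= eq_sym mulrC.
Qed.

Definition Pk (X0 : {set 'I_6}) k : pred {set 'I_6} := fun X => (X \subset X0) && (#|X| == k).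

Lemma Wp_Pk X0 k U : Wp (Pk X0 1) (Pk X0 k) U = Pk X0 k.+1 U.
Proof.
apply/existsP/andP => [[X /existsP [Y /and4P [/andP[sX cX] /andP[sY cY] /eqP dXY /eqP <-]]]|[sU cU]].
  split; first by rewrite subUset sX.
  by rewrite cardsU dXY cards0 subn0 (eqP cX) (eqP cY).
have: (0 < #|U|)%N by rewrite (eqP cU).
case/card_gt0P => i iU.
exists [set i]; apply/existsP; exists (U :\ i); apply/and4P; split.
- by rewrite /Pk cards1 sub1set (subsetP sU) ?eqxx.
- rewrite /Pk (subset_trans (subD1set _ _) sU) /=.
  by move: cU; rewrite (cardsD1 i) iU add1n eqSS.
- apply/eqP/setP => j; rewrite !inE; by case: eqP.
- by rewrite setD1K.
Qed.

Lemma Lam_CS X0 k : Lam (CS (Pk X0 1)) k = CS (Pk X0 k).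
Proof.
elim: k => [|k IH] /=; last first.
  by rewrite IH wedgeS_CS; apply: CS_eq => U; exact: Wp_Pk.
rewrite -span_seq1; apply/vspaceP => x; apply/idP/idP.
  move/(memv_ebspan [:: set0]) => H; apply/memCS => X nX; apply: H.
  by apply: contra nX; rewrite inE => /eqP ->; rewrite /Pk sub0set cards0.
move/memCS => H; apply/(memv_ebspan [:: set0]) => X; rewrite inE => nX; apply: H.
by rewrite /Pk cards_eq0 (negbTE nX) andbF.
Qed.

Definition V2 : {vspace F} := CS (Pk (~: A6) 1).

Lemma V1_CS : @V1 R = CS (Pk A6 1).
Proof.
rewrite /V1 /CS; apply/vspaceP => x.
have HP : forall X, (X \in [:: [set inord 0]; [set inord 1]]) = Pk A6 1 X.
  move=> X; apply/idP/idP.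
    by rewrite !inE => /orP [] /eqP ->; rewrite /Pk cards1 sub1set inE inordK.
  case/andP => sXA /cards1P [i Xi]; move: sXA; rewrite Xi sub1set inE.
  case: i {Xi} => [[|[|m]] Hm] //= _; rewrite !inE; apply/orP; [left|right];
    by apply/eqP; congr [set _]; apply/val_inj; rewrite /= inordK.
apply/idP/idP.
  move/(memv_ebspan [:: [set inord 0]; [set inord 1]]) => H.
  by apply/memv_ebspan => X; rewrite mem_enum => nX; apply: H; rewrite HP.
move/memv_ebspan => H; apply/(memv_ebspan [:: [set inord 0]; [set inord 1]]) => X.
by rewrite HP => nX; apply: H; rewrite mem_enum.
Qed.

Lemma G1_CS : @G1 R = CS (Pk setT 1).
Proof.
have -> : @G1 R = <<[seq ebR X | X <- [seq [set i] | i <- enum 'I_6]]>>%VS.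
  by rewrite /G1 -[in RHS]map_comp.
apply/vspaceP => x.
have HP : forall X, (X \in [seq [set i] | i <- enum 'I_6]) = Pk setT 1 X.
  move=> X; apply/idP/idP.
    by case/mapP => i _ ->; rewrite /Pk cards1 subsetT.
  by case/andP => _ /cards1P [i ->]; apply: map_f; rewrite mem_enum.
apply/idP/idP.
  move/memv_ebspan => H.
  by apply/memv_ebspan => X; rewrite mem_enum => nX; apply: H; rewrite HP.
move/memv_ebspan => H; apply/memv_ebspan => X.
by rewrite HP => nX; apply: H; rewrite mem_enum.
Qed.

Lemma complV2 : complement V2.
Proof.
split; [|split].
- by rewrite G1_CS /V2; apply: CS_sub => X /andP [_ h]; apply/andP; split; [exact: subsetT|exact: h].
- rewrite V1_CS /V2 CS_cap; apply: CS0 => X; apply/negP => /andP [/andP [s1 /cards1P [i Xi]] /andP [s2 _]].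
  move: s2; rewrite Xi sub1set inE => /negP; apply.
  by move: s1; rewrite Xi sub1set.
- rewrite V1_CS /V2 CS_add G1_CS; apply: CS_eq => X; rewrite /Pk subsetT /=.
  case: cards1P => [[i ->]|_]; last by rewrite !andbF.
  by rewrite !sub1set !inE !andbT orbN.
Qed.

Definition bidP p q : pred {set 'I_6} := fun U => (#|U :&: A6| == p) && (#|U :\: A6| == q).

Lemma bool3 (x y a : bool) : (x -> a) -> (y -> ~~ a) ->
  ((x || y) && a = x) * ((x || y) && ~~ a = y).
Proof. by case: x; case: y; case: a => //= H1 H2; first [ by move: (H1 isT) | by move: (H2 isT) | idtac ]. Qed.

Lemma Lpq_CS p q : Lpq V2 p q = CS (bidP p q).
Proof.
rewrite /Lpq V1_CS /V2 !Lam_CS wedgeS_CS; apply: CS_eq => U.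
apply/existsP/andP => [[X /existsP [Y /and4P [/andP[sX cX] /andP[sY cY] /eqP dXY /eqP <-]]]|[c1 c2]].
  have H12 : forall j, ((j \in X) -> (j \in A6)) * ((j \in Y) -> ~~ (j \in A6)).
    by move=> j; split; [exact: (subsetP sX j) | move/(subsetP sY); rewrite inE].
  have E1 : (X :|: Y) :&: A6 = X.
    by apply/setP => j; rewrite in_setI in_setU (bool3 (H12 j).1 (H12 j).2).1.
  have E2 : (X :|: Y) :\: A6 = Y.
    by apply/setP => j; rewrite in_setD in_setU andbC (bool3 (H12 j).1 (H12 j).2).2.
  by rewrite E1 E2.
exists (U :&: A6); apply/existsP; exists (U :\: A6); apply/and4P; split.
- by rewrite /Pk subsetIr.
- by rewrite /Pk c2 andbT; apply/subsetP => j; rewrite !inE => /andP [].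
- by apply/eqP/setP => j; rewrite !inE; case: (j \in U); case: (j < 2)%N.
- by apply/eqP; exact: setID.
Qed.


Lemma sum_sets (G : {set 'I_6} -> R) : \sum_X G X = \sum_(n <- iota 0 64) G (setOf n).
Proof.
rewrite (reindex (fun a : 'I_64 => setOf a)) /=; last exact: onW_bij setOf_bij.
by rewrite -(big_mkord xpredT (fun a => G (setOf a))).
Qed.

Lemma sum_I6 (G : 'I_6 -> R) (P : pred 'I_6) :
  \sum_(i | P i) G i = \sum_(n <- i6 | P (inord n)) G (inord n).
Proof.
rewrite /i6 -[iota 0 6]/(index_iota 0 6) big_mkord.
by apply: eq_big => [i|i _]; rewrite inord_val.
Qed.

Lemma intr_sum (I : Type) (s : seq I) (G : I -> int) :
  (\sum_(i <- s) G i)%:~R = \sum_(i <- s) (G i)%:~R :> R.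
Proof.
elim: s => [|i s IH]; first by rewrite !big_nil.
by rewrite !big_cons intrD IH.
Qed.

Lemma sgnE k : (sgn k)%:~R = (-1) ^+ k :> R.
Proof.
rewrite /sgn; elim: k => [|k IH] //=.
rewrite exprS -IH; case: (odd k) => /=.
  by rewrite intrN mulN1r opprK.
by rewrite intrN mulN1r.
Qed.

Lemma wsignE X Y f g : rep X f -> rep Y g -> wsR X Y = (sgn (wc f g))%:~R.
Proof. by move=> hX hY; rewrite sgnE /wsign (wcard_rep hX hY). Qed.

Lemma dfun_linear (dE : 'I_6 -> F) : linear (dfun dE).
Proof.
move=> k u v; rewrite /dfun scaler_sumr -big_split; apply: eq_bigr => X _.
by rewrite !ffunE scalerDl scalerA.
Qed.

Lemma dlinE (dE : 'I_6 -> F) x : dlin dE x = dfun dE x.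
Proof.
pose fL : {linear F -> F} := HB.pack (dfun dE) (GRing.isLinear.Build _ _ _ _ (dfun dE) (dfun_linear dE)).
exact: (lfunE fL x).
Qed.

Lemma dlin_coef (dE : 'I_6 -> F) x U : dlin dE x U = \sum_X x X * dbasis dE X U.
Proof. by rewrite dlinE /dfun sum_ffunE; apply: eq_bigr => X _; rewrite scaleE. Qed.

Lemma dlin_eb (dE : 'I_6 -> F) X : dlin dE (ebR X) = dbasis dE X.
Proof.
rewrite dlinE /dfun (bigD1 X) //= big1 => [|Y nYX]; last by rewrite ebE (negbTE nYX) scale0r.
by rewrite ebE eqxx scale1r addr0.
Qed.

Definition dEof (L : nat -> seq (nat * int)) : 'I_6 -> F :=
  fun i => \sum_(pc <- L i) (pc.2)%:~R *: ebR (setOf pc.1).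

Lemma dbasis_bits (dE : 'I_6 -> F) L (hE : forall i, dE i = dEof L i) a u :
  dbasis dE (setOf a) (setOf u) = (DC L a u)%:~R.
Proof.
rewrite /dbasis sum_ffunE /DC intr_sum sum_I6 big_mkcond.
apply: eq_big_seq => n; rewrite mem_iota => /andP [_ hn].
rewrite inE inordK //; case: (tb a n); last by [].
rewrite scaleE /Dterm intrM (rep_card (rep_lt hn (rep_setOf a))) sgnE; congr (_ * _).
rewrite hE /dEof inordK // wedge_suml sum_ffunE intr_sum; apply: eq_bigr => pc _.
rewrite wedgeZl scaleE wedge_eb_coef.
rewrite (rep_disj (rep_setOf pc.1) (rep_D1 hn (rep_setOf a))).
rewrite (rep_eq (rep_U (rep_setOf pc.1) (rep_D1 hn (rep_setOf a))) (rep_setOf u)).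
rewrite (wsignE (rep_setOf pc.1) (rep_D1 hn (rep_setOf a))).
case: (_ && _); last by rewrite mul0r mulr0.
by rewrite mul1r intrM.
Qed.


Lemma ZkE (dE : 'I_6 -> F) k x : x \in Zk dE k -> (dlin dE x = 0) /\ x \in CS (Pk setT k).
Proof. by rewrite /Zk memv_cap memv_ker G1_CS Lam_CS => /andP [/eqP h1 h2]. Qed.

Lemma cert_zero (dE : 'I_6 -> F) L (hE : forall i, dE i = dEof L i) x k t Us :
  dlin dE x = 0 -> x \in CS (Pk setT k) -> (t < 64)%N -> chk_cert L k t Us -> x (setOf t) = 0.
Proof.
move=> hd /memCS hx ht hc.
have H0 : forall u, \sum_(n <- iota 0 64) x (setOf n) * (DC L n u)%:~R = 0.
  move=> u; transitivity (dlin dE x (setOf u)); last by rewrite hd ffunE.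
  by rewrite dlin_coef sum_sets; apply: eq_bigr => n _; rewrite (dbasis_bits hE).
have E : \sum_(n <- iota 0 64) x (setOf n) * ((n == t)%:R) = 0.
  transitivity (\sum_(ul <- Us) (ul.2)%:~R * \sum_(n <- iota 0 64) x (setOf n) * (DC L n ul.1)%:~R); last first.
    by rewrite big1 // => ul _; rewrite H0 mulr0.
  under [RHS]eq_bigr => ul _ do rewrite mulr_sumr.
  rewrite exchange_big /=; apply: eq_big_seq => n hn.
  case/orP: (allP hc n hn) => [hk|/eqP hs].
    rewrite hx; first by rewrite mul0r big1 // => ul _; rewrite mul0r mulr0.
    by rewrite /Pk subsetT (rep_card (rep_setOf n)).
  transitivity (x (setOf n) * (\sum_(ul <- Us) ul.2 * DC L n ul.1)%:~R); first by rewrite hs.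
  rewrite intr_sum mulr_sumr; apply: eq_bigr => ul _; rewrite intrM; ring.
rewrite -E (bigD1_seq t) ?iota_uniq ?mem_iota //= eqxx mulr1 big1 ?addr0 // => n hnt.
by rewrite (negbTE hnt) mulr0.
Qed.

Lemma sub_bigsum (r : seq nat) (Vs : nat -> {vspace F}) i : i \in r -> (Vs i <= \sum_(j <- r) Vs j)%VS.
Proof.
elim: r => // j r IH; rewrite inE big_cons => /orP [/eqP ->|/IH H]; first exact: addvSl.
exact: subv_trans H (addvSr _ _).
Qed.

Lemma in_Fil k x : x \in CS (Pk setT k) -> (forall X, #|X :&: A6| = 0%N -> x X = 0) -> x \in Fil V2 k 1.
Proof.
move=> /memCS hx h0; rewrite (form_expand x); apply: memv_suml => X _.
case: (boolP (Pk setT k X)) => [/andP [_ /eqP cX]|nP]; last by rewrite hx // scale0r mem0v.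
case: (posnP #|X :&: A6|) => [c0|cpos]; first by rewrite h0 // scale0r mem0v.
apply: memvZ.
have hle : (#|X :&: A6| <= k)%N by rewrite -cX subset_leq_card // subsetIl.
apply: (subvP (@sub_bigsum _ (fun p => Lpq V2 p (k - p)) #|X :&: A6| _)).
  by rewrite mem_index_iota cpos ltnS.
by rewrite Lpq_CS; apply: eb_CS; rewrite /bidP eqxx /= cardsD cX.
Qed.

Lemma bidA_card a : #|setOf a :&: A6| = bidA a.
Proof. exact: rep_card (rep_I (rep_setOf a) repA). Qed.
Lemma bidB_card a : #|setOf a :\: A6| = bidB a.
Proof. exact: rep_card (rep_D (rep_setOf a) repA). Qed.

Lemma coherent_of (dE : 'I_6 -> F) L (hE : forall i, dE i = dEof L i) : chk_coh L -> coherent dE V2.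
Proof.
move=> hc; split; first exact: complV2.
have key : forall X U, dbasis dE X U != 0 ->
   ((#|U :&: A6| == #|X :&: A6|.+1) && (#|U :\: A6| == #|X :\: A6|)) ||
   ((#|U :&: A6| == #|X :&: A6|.+2) && (#|U :\: A6| == #|X :\: A6|.-1) && (0 < #|X :\: A6|)%N).
  move=> X U; case: (setOf_surj X) => a ha ->; case: (setOf_surj U) => u hu ->.
  rewrite (dbasis_bits hE) intr_eq0 !bidA_card !bidB_card => hne.
  by have := chk_all (chk_all hc ha) hu; rewrite /= (negbTE hne).
move=> p q; rewrite Lpq_CS /CS limg_span.
apply/span_subvP => z /mapP [w /mapP [X hX ->] ->]; rewrite mem_enum in hX.
rewrite dlin_eb.
case/andP: hX => /eqP cA /eqP cB.
case: q cB => [|q] cB /=.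
  rewrite addv0 Lpq_CS; apply/memCS => U nU; apply/eqP; move: nU; apply: contraR => /key.
  by rewrite cA cB /= andbF orbF.
rewrite !Lpq_CS CS_add; apply/memCS => U nU; apply/eqP; move: nU; apply: contraR => /key.
by rewrite cA cB /= => /orP [h|/andP [h _]]; apply/orP; [left|right].
Qed.

Lemma hpq0 (dE : 'I_6 -> F) k : (forall x, x \in Zk dE k -> x \in Fil V2 k 1) -> hpq dE V2 0 k = 0%N.
Proof.
move=> HZ; apply/eqP; rewrite /hpq add0n subn_eq0; apply: dimvS.
rewrite /Hfil; apply: addvS; last exact: subvv.
apply: subv_trans (capvSl _ _) _; rewrite subv_cap subvv /=; apply/subvP; exact: HZ.
Qed.

Lemma closed_Fil (dE : 'I_6 -> F) L (hE : forall i, dE i = dEof L i) k (ts : seq (nat * seq (nat * int))) :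
  all (fun a => (count (tb a) i6 != k) || (bidA a != 0%N) || (a \in map fst ts)) (iota 0 64) ->
  all (fun tc => (tc.1 < 64)%N && chk_cert L k tc.1 tc.2) ts ->
  forall x, x \in Zk dE k -> x \in Fil V2 k 1.
Proof.
move=> h1 h2 x /ZkE [hd hx]; apply: in_Fil => // X c0.
case: (setOf_surj X) => a ha EX.
have := chk_all h1 ha; cbv beta; rewrite -bidA_card -EX c0 eqxx orbF.
case/orP => [hk|/mapP [[t Us] htU /= ea]].
  by move/memCS: hx; apply; rewrite /Pk subsetT EX (rep_card (rep_setOf a)) hk.
rewrite EX ea; have /andP [ht hc] := allP h2 _ htU.
by apply: (cert_zero (Us := Us) hE hd hx).
Qed.

Lemma final (dE : 'I_6 -> F) L (hE : forall i, dE i = dEof L i) ts3 ts4 :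
  chk_coh L ->
  all (fun a => (count (tb a) i6 != 3%N) || (bidA a != 0%N) || (a \in map fst ts3)) (iota 0 64) ->
  all (fun tc => (tc.1 < 64)%N && chk_cert L 3 tc.1 tc.2) ts3 ->
  all (fun a => (count (tb a) i6 != 4%N) || (bidA a != 0%N) || (a \in map fst ts4)) (iota 0 64) ->
  all (fun tc => (tc.1 < 64)%N && chk_cert L 4 tc.1 tc.2) ts4 ->
  coherent dE V2 /\ hpq dE V2 0 3 = 0%N /\ hpq dE V2 0 4 = 0%N.
Proof.
move=> hc a3 c3 a4 c4; split; first exact: coherent_of hE hc.
by split; apply: hpq0; [exact: (closed_Fil hE a3 c3) | exact: (closed_Fil hE a4 c4)].
Qed.

End Work.

Ltac chk := cbv delta [chk_coh chk_cert cohcond DC Dterm wc bidA bidB]; rewrite ?unlock; vm_compute; reflexivity.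
Definition Lg1 (n : nat) : seq (nat * int) := nth [::] [:: [:: ]; [:: ]; [:: (3%N, 1)]; [:: (5%N, 1)]; [:: (9%N, 1)]; [:: (17%N, 1)]] n.
Definition T3g1 : seq (nat * seq (nat * int)) := [:: (28%N, [:: (39%N, -1); (27%N, 1)]); (44%N, [:: (29%N, 1)]); (52%N, [:: (51%N, 1)]); (56%N, [:: (53%N, 1)])].
Definition T4g1 : seq (nat * seq (nat * int)) := [:: (60%N, [:: (59%N, 1)])].
Lemma coh_g1 : chk_coh Lg1.
Proof. chk. Qed.
Lemma cov3_g1 : all (fun a => (count (tb a) i6 != 3%N) || (bidA a != 0%N) || (a \in map fst T3g1)) (iota 0 64).
Proof. chk. Qed.
Lemma crt3_g1 : all (fun tc => (tc.1 < 64)%N && chk_cert Lg1 3 tc.1 tc.2) T3g1.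
Proof. chk. Qed.
Lemma cov4_g1 : all (fun a => (count (tb a) i6 != 4%N) || (bidA a != 0%N) || (a \in map fst T4g1)) (iota 0 64).
Proof. chk. Qed.
Lemma crt4_g1 : all (fun tc => (tc.1 < 64)%N && chk_cert Lg1 4 tc.1 tc.2) T4g1.
Proof. chk. Qed.
Definition Lg2 (n : nat) : seq (nat * int) := nth [::] [:: [:: ]; [:: ]; [:: (3%N, 1)]; [:: (5%N, 1)]; [:: (9%N, 1)]; [:: (6%N, 1); (17%N, 1)]] n.
Definition T3g2 : seq (nat * seq (nat * int)) := [:: (28%N, [:: (39%N, -1); (27%N, 1)]); (44%N, [:: (29%N, 1)]); (52%N, [:: (51%N, 1)]); (56%N, [:: (53%N, 1)])].
Definition T4g2 : seq (nat * seq (nat * int)) := [:: (60%N, [:: (59%N, 1)])].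
Lemma coh_g2 : chk_coh Lg2.
Proof. chk. Qed.
Lemma cov3_g2 : all (fun a => (count (tb a) i6 != 3%N) || (bidA a != 0%N) || (a \in map fst T3g2)) (iota 0 64).
Proof. chk. Qed.
Lemma crt3_g2 : all (fun tc => (tc.1 < 64)%N && chk_cert Lg2 3 tc.1 tc.2) T3g2.
Proof. chk. Qed.
Lemma cov4_g2 : all (fun a => (count (tb a) i6 != 4%N) || (bidA a != 0%N) || (a \in map fst T4g2)) (iota 0 64).
Proof. chk. Qed.
Lemma crt4_g2 : all (fun tc => (tc.1 < 64)%N && chk_cert Lg2 4 tc.1 tc.2) T4g2.
Proof. chk. Qed.
Definition Lg3 (n : nat) : seq (nat * int) := nth [::] [:: [:: ]; [:: ]; [:: ]; [:: (3%N, 1)]; [:: (9%N, 1)]; [:: (10%N, 1)]] n.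
Definition T3g3 : seq (nat * seq (nat * int)) := [:: (28%N, [:: (23%N, -1)]); (44%N, [:: (39%N, -1)]); (52%N, [:: (45%N, 1)]); (56%N, [:: (51%N, 1)])].
Definition T4g3 : seq (nat * seq (nat * int)) := [:: (60%N, [:: (55%N, -1)])].
Lemma coh_g3 : chk_coh Lg3.
Proof. chk. Qed.
Lemma cov3_g3 : all (fun a => (count (tb a) i6 != 3%N) || (bidA a != 0%N) || (a \in map fst T3g3)) (iota 0 64).
Proof. chk. Qed.
Lemma crt3_g3 : all (fun tc => (tc.1 < 64)%N && chk_cert Lg3 3 tc.1 tc.2) T3g3.
Proof. chk. Qed.
Lemma cov4_g3 : all (fun a => (count (tb a) i6 != 4%N) || (bidA a != 0%N) || (a \in map fst T4g3)) (iota 0 64).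
Proof. chk. Qed.
Lemma crt4_g3 : all (fun tc => (tc.1 < 64)%N && chk_cert Lg3 4 tc.1 tc.2) T4g3.
Proof. chk. Qed.
Definition Lg4 (n : nat) : seq (nat * int) := nth [::] [:: [:: ]; [:: ]; [:: ]; [:: (3%N, 1)]; [:: (5%N, 1); (10%N, -1)]; [:: (9%N, 1); (6%N, 1)]] n.
Definition T3g4 : seq (nat * seq (nat * int)) := [:: (28%N, [:: (23%N, -1); (43%N, 1)]); (44%N, [:: (39%N, -1); (27%N, -1)]); (52%N, [:: (29%N, -1)]); (56%N, [:: (51%N, 1)])].
Definition T4g4 : seq (nat * seq (nat * int)) := [:: (60%N, [:: (55%N, -1)])].
Lemma coh_g4 : chk_coh Lg4.
Proof. chk. Qed.
Lemma cov3_g4 : all (fun a => (count (tb a) i6 != 3%N) || (bidA a != 0%N) || (a \in map fst T3g4)) (iota 0 64).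
Proof. chk. Qed.
Lemma crt3_g4 : all (fun tc => (tc.1 < 64)%N && chk_cert Lg4 3 tc.1 tc.2) T3g4.
Proof. chk. Qed.
Lemma cov4_g4 : all (fun a => (count (tb a) i6 != 4%N) || (bidA a != 0%N) || (a \in map fst T4g4)) (iota 0 64).
Proof. chk. Qed.
Lemma crt4_g4 : all (fun tc => (tc.1 < 64)%N && chk_cert Lg4 4 tc.1 tc.2) T4g4.
Proof. chk. Qed.
Definition Lg5 (n : nat) : seq (nat * int) := nth [::] [:: [:: ]; [:: ]; [:: ]; [:: (3%N, 1)]; [:: (9%N, 1)]; [:: (5%N, 1); (10%N, -1)]] n.
Definition T3g5 : seq (nat * seq (nat * int)) := [:: (28%N, [:: (23%N, -1); (43%N, -1)]); (44%N, [:: (39%N, -1)]); (52%N, [:: (45%N, 1)]); (56%N, [:: (51%N, 1)])].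
Definition T4g5 : seq (nat * seq (nat * int)) := [:: (60%N, [:: (55%N, -1)])].
Lemma coh_g5 : chk_coh Lg5.
Proof. chk. Qed.
Lemma cov3_g5 : all (fun a => (count (tb a) i6 != 3%N) || (bidA a != 0%N) || (a \in map fst T3g5)) (iota 0 64).
Proof. chk. Qed.
Lemma crt3_g5 : all (fun tc => (tc.1 < 64)%N && chk_cert Lg5 3 tc.1 tc.2) T3g5.
Proof. chk. Qed.
Lemma cov4_g5 : all (fun a => (count (tb a) i6 != 4%N) || (bidA a != 0%N) || (a \in map fst T4g5)) (iota 0 64).
Proof. chk. Qed.
Lemma crt4_g5 : all (fun tc => (tc.1 < 64)%N && chk_cert Lg5 4 tc.1 tc.2) T4g5.
Proof. chk. Qed.
Definition Lg6 (n : nat) : seq (nat * int) := nth [::] [:: [:: ]; [:: ]; [:: ]; [:: (3%N, 1)]; [:: (5%N, 1); (9%N, 1)]; [:: (10%N, 1)]] n.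
Definition T3g6 : seq (nat * seq (nat * int)) := [:: (28%N, [:: (23%N, -1)]); (44%N, [:: (39%N, -1); (43%N, 1)]); (52%N, [:: (30%N, -1)]); (56%N, [:: (51%N, 1)])].
Definition T4g6 : seq (nat * seq (nat * int)) := [:: (60%N, [:: (55%N, -1)])].
Lemma coh_g6 : chk_coh Lg6.
Proof. chk. Qed.
Lemma cov3_g6 : all (fun a => (count (tb a) i6 != 3%N) || (bidA a != 0%N) || (a \in map fst T3g6)) (iota 0 64).
Proof. chk. Qed.
Lemma crt3_g6 : all (fun tc => (tc.1 < 64)%N && chk_cert Lg6 3 tc.1 tc.2) T3g6.
Proof. chk. Qed.
Lemma cov4_g6 : all (fun a => (count (tb a) i6 != 4%N) || (bidA a != 0%N) || (a \in map fst T4g6)) (iota 0 64).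
Proof. chk. Qed.
Lemma crt4_g6 : all (fun tc => (tc.1 < 64)%N && chk_cert Lg6 4 tc.1 tc.2) T4g6.
Proof. chk. Qed.
Definition Lg7 (n : nat) : seq (nat * int) := nth [::] [:: [:: ]; [:: ]; [:: ]; [:: (3%N, 1)]; [:: (5%N, 1)]; [:: (9%N, 1)]] n.
Definition T3g7 : seq (nat * seq (nat * int)) := [:: (28%N, [:: (23%N, -1)]); (44%N, [:: (39%N, -1); (27%N, -1)]); (52%N, [:: (29%N, -1)]); (56%N, [:: (51%N, 1)])].
Definition T4g7 : seq (nat * seq (nat * int)) := [:: (60%N, [:: (55%N, -1)])].
Lemma coh_g7 : chk_coh Lg7.
Proof. chk. Qed.
Lemma cov3_g7 : all (fun a => (count (tb a) i6 != 3%N) || (bidA a != 0%N) || (a \in map fst T3g7)) (iota 0 64).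
Proof. chk. Qed.
Lemma crt3_g7 : all (fun tc => (tc.1 < 64)%N && chk_cert Lg7 3 tc.1 tc.2) T3g7.
Proof. chk. Qed.
Lemma cov4_g7 : all (fun a => (count (tb a) i6 != 4%N) || (bidA a != 0%N) || (a \in map fst T4g7)) (iota 0 64).
Proof. chk. Qed.
Lemma crt4_g7 : all (fun tc => (tc.1 < 64)%N && chk_cert Lg7 4 tc.1 tc.2) T4g7.
Proof. chk. Qed.
Definition Lg8 (n : nat) : seq (nat * int) := nth [::] [:: [:: ]; [:: ]; [:: ]; [:: ]; [:: (3%N, 1)]; [:: (17%N, 1)]] n.
Definition T3g8 : seq (nat * seq (nat * int)) := [:: (28%N, [:: (15%N, 1)]); (44%N, [:: (29%N, 1)]); (52%N, [:: (39%N, -1)]); (56%N, [:: (43%N, -1)])].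
Definition T4g8 : seq (nat * seq (nat * int)) := [:: (60%N, [:: (47%N, 1)])].
Lemma coh_g8 : chk_coh Lg8.
Proof. chk. Qed.
Lemma cov3_g8 : all (fun a => (count (tb a) i6 != 3%N) || (bidA a != 0%N) || (a \in map fst T3g8)) (iota 0 64).
Proof. chk. Qed.
Lemma crt3_g8 : all (fun tc => (tc.1 < 64)%N && chk_cert Lg8 3 tc.1 tc.2) T3g8.
Proof. chk. Qed.
Lemma cov4_g8 : all (fun a => (count (tb a) i6 != 4%N) || (bidA a != 0%N) || (a \in map fst T4g8)) (iota 0 64).
Proof. chk. Qed.
Lemma crt4_g8 : all (fun tc => (tc.1 < 64)%N && chk_cert Lg8 4 tc.1 tc.2) T4g8.
Proof. chk. Qed.

Section Final.
Variable R : realType.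
Local Notation F := (eform R).
Local Notation ebR := (@eb R).

Lemma e_setOf i : (0 < i <= 6)%N -> @e R i = ebR (setOf (2 ^ i.-1)).
Proof.
case/andP => h0 h6; rewrite /e; congr eb; apply/setP => j; rewrite !inE.
case: i h0 h6 => [|[|[|[|[|[|[|//]]]]]]] //= _ _; case: j => [[|[|[|[|[|[|//]]]]]] hj].
all: by rewrite -val_eqE /= inordK.
Qed.

Lemma wedge_eb_bits p q r s :
  all (fun m => ~~ (tb p m && tb q m)) i6 ->
  all (fun m => (tb p m || tb q m) == tb r m) i6 ->
  sgn (wc (tb p) (tb q)) = s ->
  wedge (ebR (setOf p)) (ebR (setOf q)) = s%:~R *: ebR (setOf r).
Proof.
move=> hd hu hs; apply/ffunP => U.
rewrite wedge_eb_coef scaleE ebE (rep_disj (rep_setOf p) (rep_setOf q)) hd /=.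
rewrite (wsignE R (rep_setOf p) (rep_setOf q)) hs.
have -> : setOf p :|: setOf q = setOf r.
  by apply/eqP; rewrite (rep_eq (rep_U (rep_setOf p) (rep_setOf q)) (rep_setOf r)).
by rewrite eq_sym mulrC.
Qed.

Lemma ee_bits i j r s : (0 < i <= 6)%N -> (0 < j <= 6)%N ->
  all (fun m => ~~ (tb (2 ^ i.-1) m && tb (2 ^ j.-1) m)) i6 ->
  all (fun m => (tb (2 ^ i.-1) m || tb (2 ^ j.-1) m) == tb r m) i6 ->
  sgn (wc (tb (2 ^ i.-1)) (tb (2 ^ j.-1))) = s ->
  @ee R i j = s%:~R *: ebR (setOf r).
Proof. by move=> hi hj; rewrite /ee (e_setOf hi) (e_setOf hj); apply: wedge_eb_bits. Qed.

Ltac eeb := apply: ee_bits => //; rewrite /sgn /wc unlock; vm_compute; reflexivity.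

Lemma ee12 : @ee R 1 2 = (1:int)%:~R *: ebR (setOf 3). Proof. eeb. Qed.
Lemma ee13 : @ee R 1 3 = (1:int)%:~R *: ebR (setOf 5). Proof. eeb. Qed.
Lemma ee14 : @ee R 1 4 = (1:int)%:~R *: ebR (setOf 9). Proof. eeb. Qed.
Lemma ee15 : @ee R 1 5 = (1:int)%:~R *: ebR (setOf 17). Proof. eeb. Qed.
Lemma ee23 : @ee R 2 3 = (1:int)%:~R *: ebR (setOf 6). Proof. eeb. Qed.
Lemma ee24 : @ee R 2 4 = (1:int)%:~R *: ebR (setOf 10). Proof. eeb. Qed.
Lemma ee42 : @ee R 4 2 = (-1:int)%:~R *: ebR (setOf 10). Proof. eeb. Qed.

Ltac hE_tac := case=> [[|[|[|[|[|[|//]]]]]] hi];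
  rewrite /g1 /g2 /g3 /g4 /g5 /g6 /g7 /g8 /mk6 /dEof /= ?big_cons ?big_nil /= ?addr0
          ?ee12 ?ee13 ?ee14 ?ee15 ?ee23 ?ee24 ?ee42 //.

Lemma hE1 i : @g1 R i = dEof R Lg1 i. Proof. move: i; hE_tac. Qed.
Lemma hE2 i : @g2 R i = dEof R Lg2 i. Proof. move: i; hE_tac. Qed.
Lemma hE3 i : @g3 R i = dEof R Lg3 i. Proof. move: i; hE_tac. Qed.
Lemma hE4 i : @g4 R i = dEof R Lg4 i. Proof. move: i; hE_tac. Qed.
Lemma hE5 i : @g5 R i = dEof R Lg5 i. Proof. move: i; hE_tac. Qed.
Lemma hE6 i : @g6 R i = dEof R Lg6 i. Proof. move: i; hE_tac. Qed.
Lemma hE7 i : @g7 R i = dEof R Lg7 i. Proof. move: i; hE_tac. Qed.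
Lemma hE8 i : @g8 R i = dEof R Lg8 i. Proof. move: i; hE_tac. Qed.

End Final.

Unset Implicit Arguments.

Theorem lemma7 (R : realType) (dE : 'I_6 -> eform R) :
  (dE = @g1 R \/ dE = @g2 R \/ dE = @g3 R \/ dE = @g4 R \/
   dE = @g5 R \/ dE = @g6 R \/ dE = @g7 R \/ dE = @g8 R) ->
  exists V2 : {vspace eform R},
    coherent dE V2 /\ hpq dE V2 0 3 = 0%N /\ hpq dE V2 0 4 = 0%N.
Proof.
move=> H; exists (V2 R).
case: H => [->|[->|[->|[->|[->|[->|[->|->]]]]]]].
- exact: (final (hE1 R) coh_g1 cov3_g1 crt3_g1 cov4_g1 crt4_g1).
- exact: (final (hE2 R) coh_g2 cov3_g2 crt3_g2 cov4_g2 crt4_g2).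
- exact: (final (hE3 R) coh_g3 cov3_g3 crt3_g3 cov4_g3 crt4_g3).
- exact: (final (hE4 R) coh_g4 cov3_g4 crt3_g4 cov4_g4 crt4_g4).
- exact: (final (hE5 R) coh_g5 cov3_g5 crt3_g5 cov4_g5 crt4_g5).
- exact: (final (hE6 R) coh_g6 cov3_g6 crt3_g6 cov4_g6 crt4_g6).
- exact: (final (hE7 R) coh_g7 cov3_g7 crt3_g7 cov4_g7 crt4_g7).
- exact: (final (hE8 R) coh_g8 cov3_g8 crt3_g8 cov4_g8 crt4_g8).
Qed.
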